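(* Let $T$ be a causal theory with explainable symbols $\mathbf{p}$ all of whose rules are D-rules, let $\Pi$ be the conjunction of $\mathrm{tr}_d[R]$ over all rules $R$ of $T$, and let $CC$ be the conjunction of the completeness constraints for $\mathbf{p}$. Then $T\land CC\models\mathrm{SM}_{\mathbf{p}\widehat{\mathbf{p}}}[\Pi\land CC]$.
   Context: A causal theory $T$ consists of a list $\mathbf{p}$ of distinct predicate constants (explainable symbols, not equality) and a finite set of causal rules $F\Leftarrow G$. With predicate variables $u_p$ ($p\in\mathbf{p}$), list $\mathbf{u}$, $T^\dagger(\mathbf{u})$ is the conjunction of $\forall\mathbf{x}(G\to F^{\mathbf{p}}_{\mathbf{u}})$ over the rules ($\mathbf{x}$ the free variables, $F^{\mathbf{p}}_{\mathbf{u}}$ replaces each $p$ by $u_p$), and $T$ is identified with the sentence $\forall\mathbf{u}(T^\dagger(\mathbf{u})\leftrightarrow(\mathbf{u}=\mathbf{p}))$, where $\mathbf{u}=\mathbf{p}$ is $\bigwedge_p\forall\mathbf{x}(u_p(\mathbf{x})\leftrightarrow p(\mathbf{x}))$. A D-rule has the form $\bigvee_{A\in Pos}A\lor\bigvee_{A\in Neg}\neg A\Leftarrow G$ with $Pos,Neg$ finite sets of atoms with predicates in $\mathbf{p}$ and $G$ without $\to$. For $p\in\mathbf{p}$, $\widehat p$ is a new predicate constant of the same arity; for $A=p(\mathbf{t})$, $\widehat A=\widehat p(\mathbf{t})$. $\mathrm{tr}_d$ of the D-rule is $\widetilde\forall\big(\neg\neg G\land\bigwedge_{A\in Pos}(\widehat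 A\lor\neg\widehat A)\land\bigwedge_{A\in Neg}(A\lor\neg A)\to\bigvee_{A\in Pos}A\lor\bigvee_{A\in Neg}\widehat A\big)$ ($\widetilde\forall$ = universal closure). $CC$ is the conjunction over $p\in\mathbf{p}$ of $\forall\mathbf{x}\neg(p(\mathbf{x})\land\widehat p(\mathbf{x}))$ and $\forall\mathbf{x}\neg(\neg p(\mathbf{x})\land\neg\widehat p(\mathbf{x}))$. For a logic program $F$ (conjunction of sentences $\widetilde\forall(F_1\to F_2)$ with no other $\to$), $\mathrm{SM}_{\mathbf{p}\widehat{\mathbf{p}}}[F]$ is $F\land\neg\exists\mathbf{u}\widehat{\mathbf{u}}\big(((\mathbf{u},\widehat{\mathbf{u}})<(\mathbf{p},\widehat{\mathbf{p}}))\land F^\diamond(\mathbf{u},\widehat{\mathbf{u}})\big)$, where $\widehat{\mathbf{u}}=(\widehat u_p)$ are further predicate variables, $F^\diamond$ replaces each occurrence of $p$ / $\widehat p$ not in the scope of $\neg$ by $u_p$ / $\widehat u_p$, $p\le q$ is $\forall\mathbf{x}(p(\mathbf{x})\to q(\mathbf{x}))$ (componentwise for tuples) and $\mathbf{a}<\mathbf{b}$ is $(\mathbf{a}\le\mathbf{b})\land\neg(\mathbf{b}\le\mathbf{a})$. $\models$ is classical (second-order) entailment. *)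

(* Defs.v *)
From Stdlib Require Import List Arith.
Import ListNotations.
Set Implicit Arguments.

Inductive term : Type :=
| Var (v : nat)
| Fn (f : nat) (args : list term).

(* predicate constants: ordinary constants [PC p] and, for an explainable
   symbol p, the new constant [PHat p] (written \widehat p in the paper) *)
Inductive psym : Type :=
| PC (p : nat)
| PHat (p : nat).

Inductive formula : Type :=
| FBot
| FTop
| FAtom (s : psym) (ts : list term)
| FEq (t1 t2 : term)
| FNeg (F : formula)
| FAnd (F G : formula)
| FOr (F G : formula)
| FImp (F G : formula)
| FAll (v : nat) (F : formula)
| FEx (v : nat) (F : formula).

Definition bigOr (l : list formula) : formula := fold_right FOr FBot l.
Definition bigAnd (l : list formula) : formula := fold_right FAnd FTop l.

Section Sem.
Variable D : Type.
Variable fI : nat -> list D -> D.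

Fixpoint teval (s : nat -> D) (t : term) : D :=
  match t with
  | Var v => s v
  | Fn f ts => fI f (map (teval s) ts)
  end.

Definition upd (s : nat -> D) (v : nat) (d : D) : nat -> D :=
  fun w => if Nat.eqb w v then d else s w.

(* [evalD Ineg Ipos F s]: truth value of F under assignment s where atoms
   NOT in the scope of a negation are interpreted by [Ipos] and atoms in the
   scope of a negation by [Ineg].  With Ineg = Ipos = I this is ordinary
   satisfaction; with Ipos = I[p:=u, phat:=uhat] and Ineg = I it is the
   satisfaction of F^diamond(u,uhat). *)
Fixpoint evalD (Ineg Ipos : psym -> list D -> Prop) (F : formula) (s : nat -> D)
  : Prop :=
  match F with
  | FBot => False
  | FTop => True
  | FAtom p ts => Ipos p (map (teval s) ts)
  | FEq t1 t2 => teval s t1 = teval s t2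
  | FNeg G => ~ evalD Ineg Ineg G s
  | FAnd G H => evalD Ineg Ipos G s /\ evalD Ineg Ipos H s
  | FOr G H => evalD Ineg Ipos G s \/ evalD Ineg Ipos H s
  | FImp G H => evalD Ineg Ipos G s -> evalD Ineg Ipos H s
  | FAll v G => forall d, evalD Ineg Ipos G (upd s v d)
  | FEx v G => exists d, evalD Ineg Ipos G (upd s v d)
  end.

Definition sat (I : psym -> list D -> Prop) (F : formula) (s : nat -> D) : Prop :=
  evalD I I F s.

Definition holds (I : psym -> list D -> Prop) (F : formula) : Prop :=
  forall s, sat I F s.

Definition repl_p (E : list nat) (I : psym -> list D -> Prop)
  (u : nat -> list D -> Prop) : psym -> list D -> Prop :=
  fun q => match q with
           | PC p => if existsb (Nat.eqb p) E then u p else I (PC p)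
           | PHat p => I (PHat p)
           end.

Definition repl_ph (E : list nat) (I : psym -> list D -> Prop)
  (u uh : nat -> list D -> Prop) : psym -> list D -> Prop :=
  fun q => match q with
           | PC p => if existsb (Nat.eqb p) E then u p else I (PC p)
           | PHat p => if existsb (Nat.eqb p) E then uh p else I (PHat p)
           end.

Definition le_on (ar : nat -> nat) (E : list nat) (u v : nat -> list D -> Prop) : Prop :=
  forall p, In p E -> forall l, length l = ar p -> u p l -> v p l.

Definition eq_on (ar : nat -> nat) (E : list nat) (u v : nat -> list D -> Prop) : Prop :=
  forall p, In p E -> forall l, length l = ar p -> (u p l <-> v p l).
End Sem.

Definition atom : Type := (nat * list term)%type.
Definition atomF (a : atom) : formula := FAtom (PC (fst a)) (snd a).
Definition hatF (a : atom) : formula := FAtom (PHat (fst a)) (snd a).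

(* a D-rule  \/_{A in Pos} A \/ \/_{A in Neg} ~A  <=  G *)
Record drule : Type := DRule {
  dpos : list atom;
  dneg : list atom;
  dbody : formula }.

Definition dhead (r : drule) : formula :=
  FOr (bigOr (map atomF (dpos r))) (bigOr (map (fun a => FNeg (atomF a)) (dneg r))).

Record ctheory : Type := CTheory {
  expl : list nat;
  drules : list drule }.

Fixpoint no_imp (F : formula) : Prop :=
  match F with
  | FBot | FTop | FAtom _ _ | FEq _ _ => True
  | FNeg G | FAll _ G | FEx _ G => no_imp G
  | FAnd G H | FOr G H => no_imp G /\ no_imp H
  | FImp _ _ => False
  end.

Fixpoint sig_ok (ar : nat -> nat) (E : list nat) (F : formula) : Prop :=
  match F with
  | FBot | FTop | FEq _ _ => True
  | FAtom (PC p) ts => In p E -> length ts = ar p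
  | FAtom (PHat _) _ => False
  | FNeg G | FAll _ G | FEx _ G => sig_ok ar E G
  | FAnd G H | FOr G H | FImp G H => sig_ok ar E G /\ sig_ok ar E H
  end.

Definition wf_ctheory (ar : nat -> nat) (T : ctheory) : Prop :=
  NoDup (expl T) /\
  forall r, In r (drules T) ->
    (forall a, In a (dpos r ++ dneg r) -> In (fst a) (expl T) /\ length (snd a) = ar (fst a)) /\
    no_imp (dbody r) /\ sig_ok ar (expl T) (dbody r).

(* T^dagger(u): conjunction over the rules of  forall x (G -> F^p_u) *)
Definition Tdag (D : Type) (fI : nat -> list D -> D) (I : psym -> list D -> Prop)
  (T : ctheory) (u : nat -> list D -> Prop) : Prop :=
  forall r, In r (drules T) -> forall s,
    sat fI I (dbody r) s -> sat fI (repl_p (expl T) I u) (dhead r) s.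

(* truth of the sentence T :=  forall u (T^dagger(u) <-> u = p) *)
Definition causal_holds (D : Type) (fI : nat -> list D -> D) (ar : nat -> nat)
  (I : psym -> list D -> Prop) (T : ctheory) : Prop :=
  forall u : nat -> list D -> Prop,
    Tdag fI I T u <-> eq_on ar (expl T) u (fun p => I (PC p)).

(* tr_d of a D-rule (the universal closure is taken by [holds]) *)
Definition tr_d (r : drule) : formula :=
  FImp (FAnd (FNeg (FNeg (dbody r)))
             (FAnd (bigAnd (map (fun a => FOr (hatF a) (FNeg (hatF a))) (dpos r)))
                   (bigAnd (map (fun a => FOr (atomF a) (FNeg (atomF a))) (dneg r)))))
       (FOr (bigOr (map atomF (dpos r))) (bigOr (map hatF (dneg r)))).

Definition Pi (T : ctheory) : list formula := map tr_d (drules T).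

(* completeness constraints for the symbols in E (free variables 0..ar p - 1,
   universally closed by [holds]) *)
Definition cc_formulas (ar : nat -> nat) (E : list nat) : list formula :=
  flat_map (fun p =>
     let xs := map Var (seq 0 (ar p)) in
     [ FNeg (FAnd (FAtom (PC p) xs) (FAtom (PHat p) xs));
       FNeg (FAnd (FNeg (FAtom (PC p) xs)) (FNeg (FAtom (PHat p) xs))) ]) E.

(* truth of SM_{p phat}[F] where F is the conjunction of the sentences
   (universal closures) in Fs *)
Definition SM (D : Type) (fI : nat -> list D -> D) (ar : nat -> nat) (E : list nat)
  (I : psym -> list D -> Prop) (Fs : list formula) : Prop :=
  (forall F, In F Fs -> holds fI I F) /\
  ~ exists u uh : nat -> list D -> Prop,
      (le_on ar E u (fun p => I (PC p)) /\ le_on ar E uh (fun p => I (PHat p)) /\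
       ~ (le_on ar E (fun p => I (PC p)) u /\ le_on ar E (fun p => I (PHat p)) uh)) /\
      (forall F, In F Fs -> forall s, evalD fI I (repl_ph E I u uh) F s).

(* Main.v *)
Require Import Defs.
From Stdlib Require Import List Arith Classical.
Import ListNotations.

Section H.
Variable D : Type.
Variable fI : nat -> list D -> D.

Lemma evalD_bigOr Ineg Ipos l s :
  evalD fI Ineg Ipos (bigOr l) s <-> exists F, In F l /\ evalD fI Ineg Ipos F s.
Proof.
  induction l as [|F l IH]; simpl.
  - split; [tauto| intros [F [[] _]]].
  - rewrite IH. split.
    + intros [H|[G [H1 H2]]]; eauto.
    + intros [G [[<-|H1] H2]]; eauto.
Qed.

Lemma evalD_bigAnd Ineg Ipos l s :
  evalD fI Ineg Ipos (bigAnd l) s <-> forall F, In F l -> evalD fI Ineg Ipos F s.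
Proof.
  induction l as [|F l IH]; simpl.
  - split; tauto.
  - rewrite IH. split.
    + intros [H1 H2] G [<-|HG]; auto.
    + intros H; split; auto.
Qed.

Lemma map_nth_seq0 (d : D) (l : list D) :
  map (fun i => nth i l d) (seq 0 (length l)) = l.
Proof.
  induction l as [|a l IH]; simpl; auto.
  f_equal. rewrite <- seq_shift, map_map. simpl. exact IH.
Qed.
End H.

Lemma existsb_in q E : In q E -> existsb (Nat.eqb q) E = true.
Proof.
  intro H. apply existsb_exists. exists q. split; auto. apply Nat.eqb_refl.
Qed.

Theorem lemma8 (ar : nat -> nat) (T : ctheory) (HT : wf_ctheory ar T)
  (D : Type) (HD : inhabited D) (fI : nat -> list D -> D) (I : psym -> list D -> Prop) :
  causal_holds fI ar I T ->
  (forall F, In F (cc_formulas ar (expl T)) -> holds fI I F) ->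
  SM fI ar (expl T) I (Pi T ++ cc_formulas ar (expl T)).
Proof.
  intros Hc Hcc.
  destruct HD as [d].
  destruct HT as [_ Hwf].
  set (E := expl T) in *.
  assert (CC : forall q l, In q E -> length l = ar q ->
            ~ (I (PC q) l /\ I (PHat q) l) /\ ~ (~ I (PC q) l /\ ~ I (PHat q) l)).
  { intros q l Hq Hl.
    set (s := fun i => nth i l d).
    assert (Hm : map (teval fI s) (map Var (seq 0 (ar q))) = l).
    { rewrite map_map. simpl. rewrite <- Hl. apply map_nth_seq0. }
    split.
    - assert (H := Hcc (FNeg (FAnd (FAtom (PC q) (map Var (seq 0 (ar q))))
                                    (FAtom (PHat q) (map Var (seq 0 (ar q))))))).
      refine (_ (H _ s)).
      + unfold sat; simpl. rewrite Hm. auto.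
      + unfold cc_formulas. apply in_flat_map. exists q. simpl; auto.
    - assert (H := Hcc (FNeg (FAnd (FNeg (FAtom (PC q) (map Var (seq 0 (ar q)))))
                                    (FNeg (FAtom (PHat q) (map Var (seq 0 (ar q)))))))).
      refine (_ (H _ s)).
      + unfold sat; simpl. rewrite Hm. auto.
      + unfold cc_formulas. apply in_flat_map. exists q. simpl; auto. }
  split.
  -
    intros F HF. apply in_app_or in HF as [HF|HF]; [|auto].
    unfold Pi in HF. apply in_map_iff in HF as [r [<- Hr]].
    intro s. unfold sat, tr_d. simpl. intros [HnnG _].
    assert (HG : sat fI I (dbody r) s) by (apply NNPP; exact HnnG).
    assert (Hd : Tdag fI I T (fun p => I (PC p))).
    { apply (proj2 (Hc _)). intros p _ l _. tauto. }
    specialize (Hd r Hr s HG).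
    destruct (Hwf r Hr) as [Hat _].
    unfold sat, dhead in Hd. simpl in Hd.
    destruct Hd as [Hd|Hd].
    + left. apply evalD_bigOr in Hd as [G [HG1 HG2]].
      apply in_map_iff in HG1 as [a [<- Ha]].
      apply evalD_bigOr. exists (atomF a). split; [apply in_map; auto|].
      unfold atomF in *. simpl in *. destruct (existsb _ _); auto.
    + right. apply evalD_bigOr in Hd as [G [HG1 HG2]].
      apply in_map_iff in HG1 as [a [<- Ha]].
      apply evalD_bigOr. exists (hatF a). split; [apply in_map; auto|].
      unfold atomF, hatF in *. simpl in *.
      assert (Hn : ~ I (PC (fst a)) (map (teval fI s) (snd a))).
      { destruct (existsb _ _); auto. }
      destruct (Hat a (in_or_app _ _ _ (or_intror Ha))) as [Ha1 Ha2].
      destruct (CC (fst a) (map (teval fI s) (snd a)) Ha1) as [_ C2].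
      { rewrite length_map; auto. }
      apply NNPP. intro; apply C2; auto.
  - intros [u [uh [[Hu [Huh Hstr]] HPi]]].
    apply Hstr.
    set (w := fun q l => u q l \/ (~ I (PC q) l /\ ~ uh q l)).
    assert (Hw : Tdag fI I T w).
    { intros r Hr s HG.
      destruct (Hwf r Hr) as [Hat _].
      assert (HP := HPi (tr_d r) (in_or_app _ _ _ (or_introl (in_map _ _ _ Hr))) s).
      unfold tr_d in HP. simpl in HP.
      unfold sat, dhead. simpl.
      set (args := fun a : atom => map (teval fI s) (snd a)).
      assert (Rp : forall a, In a (dpos r ++ dneg r) ->
                 repl_p E I w (PC (fst a)) (args a) = w (fst a) (args a)).
      { intros a Ha. simpl. rewrite existsb_in; auto. apply (Hat a Ha). }
      assert (Rph : forall a, In a (dpos r ++ dneg r) ->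
                 repl_ph E I u uh (PC (fst a)) (args a) = u (fst a) (args a)
                 /\ repl_ph E I u uh (PHat (fst a)) (args a) = uh (fst a) (args a)).
      { intros a Ha. simpl. rewrite existsb_in; auto. apply (Hat a Ha). }
      assert (Len : forall a, In a (dpos r ++ dneg r) -> length (args a) = ar (fst a)).
      { intros a Ha. unfold args. rewrite length_map. apply (Hat a Ha). }
      assert (InE : forall a, In a (dpos r ++ dneg r) -> In (fst a) E).
      { intros a Ha. apply (Hat a Ha). }
      destruct (classic (exists a, In a (dpos r) /\ ~ I (PC (fst a)) (args a) /\ ~ uh (fst a) (args a)))
        as [[a [Ha [H1 H2]]]|Hno1].
      { left. apply evalD_bigOr. exists (atomF a). split; [apply in_map; auto|].
        unfold atomF; simpl. fold (args a). rewrite existsb_in by (apply InE; apply in_or_app; auto).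
        right; auto. }
      destruct (classic (exists a, In a (dneg r) /\ I (PC (fst a)) (args a) /\ ~ u (fst a) (args a)))
        as [[a [Ha [H1 H2]]]|Hno2].
      { right. apply evalD_bigOr. exists (FNeg (atomF a)). split; [apply in_map_iff; exists a; auto|].
        unfold atomF; simpl. fold (args a). rewrite existsb_in by (apply InE; apply in_or_app; auto).
        intros [H|[H _]]; auto. }
      destruct HP as [HP|HP].
      { split; [intro HnG; exact (HnG HG)|split].
        - apply evalD_bigAnd. intros F HF. apply in_map_iff in HF as [a [<- Ha]].
          unfold hatF. simpl. fold (args a).
          assert (Ha' : In a (dpos r ++ dneg r)) by (apply in_or_app; auto).
          rewrite existsb_in by (apply InE; auto).
          destruct (classic (uh (fst a) (args a))) as [Hx|Hx]; [left; auto|right].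
          intro Hh. destruct (CC (fst a) (args a) (InE a Ha') (Len a Ha')) as [C1 _].
          apply C1; split; auto. apply NNPP; intro Hn. apply Hno1; eauto.
        - apply evalD_bigAnd. intros F HF. apply in_map_iff in HF as [a [<- Ha]].
          unfold atomF. simpl. fold (args a).
          assert (Ha' : In a (dpos r ++ dneg r)) by (apply in_or_app; auto).
          rewrite existsb_in by (apply InE; auto).
          destruct (classic (u (fst a) (args a))) as [Hx|Hx]; [left; auto|right].
          intro Hh. apply Hno2; eauto. }
      + left. apply evalD_bigOr in HP as [G [HG1 HG2]].
        apply in_map_iff in HG1 as [a [<- Ha]].
        apply evalD_bigOr. exists (atomF a). split; [apply in_map; auto|].
        assert (Ha' : In a (dpos r ++ dneg r)) by (apply in_or_app; auto).
        unfold atomF in *. simpl in *. fold (args a) in *.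
        rewrite existsb_in in HG2 by (apply InE; auto). rewrite existsb_in by (apply InE; auto). left; auto.
      + right. apply evalD_bigOr in HP as [G [HG1 HG2]].
        apply in_map_iff in HG1 as [a [<- Ha]].
        apply evalD_bigOr. exists (FNeg (atomF a)). split; [apply in_map_iff; exists a; auto|].
        assert (Ha' : In a (dpos r ++ dneg r)) by (apply in_or_app; auto).
        unfold atomF, hatF in *. simpl in *. fold (args a) in *.
        rewrite existsb_in in HG2 by (apply InE; auto). rewrite existsb_in by (apply InE; auto).
        assert (Hh : I (PHat (fst a)) (args a)) by (apply (Huh _ (InE a Ha') _ (Len a Ha')); auto).
        destruct (CC (fst a) (args a) (InE a Ha') (Len a Ha')) as [C1 _].
        intros [Hx|[Hx1 Hx2]]; auto.
        all: try (apply C1; split; auto; apply (Hu _ (InE a Ha') _ (Len a Ha')); auto). }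
    apply Hc in Hw.
    split.
    + intros q Hq l Hl H. pose proof (proj2 (Hw q Hq l Hl) H) as H'.
      destruct H' as [H'|[H' _]]; [auto|contradiction].
    + intros q Hq l Hl H.
      destruct (CC q l Hq Hl) as [C1 _].
      apply NNPP; intro Hn. apply C1; split; auto.
      apply (Hw q Hq l Hl). right; split; auto.
Qed.
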